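(* For all sufficiently large $N$, the semigroup generated by $\Gamma_N$ is Zariski dense in $\mathrm{SL}(3,\mathbb R)$.
   Context: Let $A_1=\begin{pmatrix}1&1&1\\0&1&0\\0&0&1\end{pmatrix}$, $A_2=\begin{pmatrix}1&0&0\\1&1&1\\0&0&1\end{pmatrix}$, $A_3=\begin{pmatrix}1&0&0\\0&1&0\\1&1&1\end{pmatrix}$, $\Gamma=\{A_i^nA_j: i\ne j\in\{1,2,3\},\ n\ge1\}$, and let $(\Gamma_N)_N$ be an increasing sequence of finite subsets of $\Gamma$ with $\bigcup_N\Gamma_N=\Gamma$. The Zariski topology on $\mathrm{SL}(3,\mathbb R)$ has as closed sets the common zero sets of families of polynomials in the matrix entries. *)

(* Defs.v *)
From HB Require Import structures.
From mathcomp Require Import all_boot all_order all_algebra.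
From mathcomp Require Import reals.
From mathcomp Require Import mpoly.
Set Implicit Arguments. Unset Strict Implicit. Unset Printing Implicit Defensive.
Import Order.TTheory GRing.Theory Num.Theory.
Local Open Scope ring_scope.

(* The three generators A_1, A_2, A_3 (indexed by i : 'I_3, i.e. A_(i+1)):
   identity matrix with row i replaced by (1 1 1). *)
Definition Agen (R : realType) (i : 'I_3) : 'M[R]_3 :=
  \matrix_(r < 3, c < 3) (if r == c then 1 else if r == i then 1 else 0).

Definition inGamma (R : realType) (M : 'M[R]_3) : Prop :=
  exists (i j : 'I_3) (n : nat), i != j /\ (1 <= n)%N /\ M = Agen R i ^+ n *m Agen R j.

Inductive semigroup_gen (R : realType) (S : 'M[R]_3 -> Prop) : 'M[R]_3 -> Prop :=
  | sg_base M : S M -> semigroup_gen S M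
  | sg_mul M M' : semigroup_gen S M -> semigroup_gen S M' -> semigroup_gen S (M *m M').

Definition entries (R : realType) (M : 'M[R]_3) : 'I_(3 * 3) -> R :=
  fun k => mxvec M 0 k.

(* Zariski density in SL(3,R): every polynomial in the matrix entries vanishing
   on S vanishes on all of SL(3,R) (i.e. the Zariski closure of S contains SL(3,R)). *)
Definition zariski_dense_SL3 (R : realType) (S : 'M[R]_3 -> Prop) : Prop :=
  forall p : {mpoly R[3 * 3]},
    (forall M, S M -> p.@[entries M] = 0) ->
    forall M : 'M[R]_3, \det M = 1 -> p.@[entries M] = 0.

(* Main.v *)
Require Import Defs.
From HB Require Import structures.
From mathcomp Require Import all_boot all_order all_algebra.
From mathcomp Require Import reals.
From mathcomp Require Import mpoly.
From mathcomp Require Import mxtens.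
From mathcomp Require Import ring.
From mathcomp Require Import zify.
Set Implicit Arguments. Unset Strict Implicit. Unset Printing Implicit Defensive.
Import Order.TTheory GRing.Theory Num.Theory.
Local Open Scope ring_scope.
Definition mulhom (R : realType) n (Phi : 'M[R]_3 -> 'M[R]_n) :=
  (forall A B, Phi (A *m B) = Phi A *m Phi B) /\ Phi 1%:M = 1%:M.

Definition RepF (R : realType) (F : 'M[R]_3 -> R) :=
  exists n (Phi : 'M[R]_3 -> 'M[R]_n) (u : 'rV[R]_n) (v : 'cV[R]_n),
    mulhom Phi /\ forall M, F M = (u *m Phi M *m v) 0 0.

Lemma RepF_ext (R : realType) (F G : 'M[R]_3 -> R) :
  (forall M, F M = G M) -> RepF F -> RepF G.
Proof.
move=> e [n [Phi [u [v [h hF]]]]]; exists n, Phi, u, v; split=> // M.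
by rewrite -e.
Qed.

Lemma RepF_const (R : realType) (c : R) : RepF (fun _ => c).
Proof.
exists 1%N, (fun _ => 1%:M), c%:M, 1%:M; split.
  by split=> // A B; rewrite mul1mx.
by move=> M; rewrite !mulmx1 mxE eqxx mulr1n.
Qed.

Lemma RepF_coord (R : realType) (a b : 'I_3) : RepF (fun M : 'M[R]_3 => M a b).
Proof.
exists 3%N, id, (delta_mx 0 a), (delta_mx b 0); split => // M.
by rewrite -rowE -colE !mxE.
Qed.

Lemma RepF_add (R : realType) (F G : 'M[R]_3 -> R) :
  RepF F -> RepF G -> RepF (fun M => F M + G M).
Proof.
move=> [n [Phi [u [v [[h1 h2] hF]]]]] [n' [Phi' [u' [v' [[h1' h2'] hG]]]]].
exists (n + n')%N, (fun M => block_mx (Phi M) 0 0 (Phi' M)), (row_mx u u'),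
  (col_mx v v'); split; first split.
- move=> A B; rewrite mulmx_block h1 h1'.
  by rewrite !mulmx0 !mul0mx !addr0 !add0r.
- by rewrite h2 h2' -scalar_mx_block.
- move=> M; rewrite hF hG mul_row_block !mulmx0 !addr0 !add0r mul_row_col.
  by rewrite [RHS]mxE.
Qed.

Lemma tens11 (R : realType) m n :
  (1%:M : 'M[R]_m) *t (1%:M : 'M[R]_n) = 1%:M.
Proof.
apply/matrixP=> i j.
case: (mxtens_indexP i)=> i0 i1; case: (mxtens_indexP j)=> j0 j1.
rewrite tensmxE !mxE -natrM mulnb (inj_eq (can_inj (@mxtens_indexK _ _))).
by rewrite xpair_eqE.
Qed.

Lemma tens00 (R : realType) (A B : 'M[R]_1) : (A *t B) 0 0 = A 0 0 * B 0 0.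
Proof.
have -> : (0 : 'I_(1 * 1)) = mxtens_index (0, 0) by apply: val_inj.
by rewrite tensmxE; congr (A _ _ * B _ _); apply: val_inj.
Qed.

Lemma RepF_mul (R : realType) (F G : 'M[R]_3 -> R) :
  RepF F -> RepF G -> RepF (fun M => F M * G M).
Proof.
move=> [n [Phi [u [v [[h1 h2] hF]]]]] [n' [Phi' [u' [v' [[h1' h2'] hG]]]]].
exists (n * n')%N, (fun M => Phi M *t Phi' M), (u *t u'), (v *t v');
  split; first split.
- by move=> A B; rewrite h1 h1' tensmx_mul.
- by rewrite h2 h2' tens11.
- by move=> M; rewrite hF hG -tens00 -!tensmx_mul.
Qed.

Lemma RepF_lr (R : realType) (F : 'M[R]_3 -> R) (x y : 'M[R]_3) :
  RepF F -> RepF (fun M => F (x *m M *m y)).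
Proof.
move=> [n [Phi [u [v [[h1 h2] hF]]]]].
exists n, Phi, (u *m Phi x), (Phi y *m v); split=> // M.
by rewrite hF !h1 !mulmxA.
Qed.
Lemma lin_l (R : realType) n (u : 'rV[R]_n) (v : 'cV[R]_n) (I : finType)
  (c : I -> R) (X : I -> 'M[R]_n) :
  (u *m (\sum_i c i *: X i) *m v) 0 0 = \sum_i c i * (u *m X i *m v) 0 0.
Proof.
rewrite mulmx_sumr mulmx_suml summxE; apply: eq_bigr => i _.
by rewrite -scalemxAr -scalemxAl mxE.
Qed.

Lemma RepF_inv (R : realType) (F : 'M[R]_3 -> R) (g : 'M[R]_3) :
  RepF F -> g \in unitmx -> (forall k, F (g ^+ k.+1) = 0) -> F 1%:M = 0.
Proof.
move=> [n [Phi [u [v [[h1 h2] hF]]]]] ug hk.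
rewrite hF h2 mulmx1.
case: n Phi u v h1 h2 hF hk => [|n] Phi u v h1 h2 hF hk.
  by rewrite mxE big_ord0.
set G := Phi g.
have hpow k : Phi (g ^+ k) = G ^+ k.
  elim: k => [|k IH]; first by rewrite !expr0 -!idmxE h2.
  by rewrite exprS -mulmxE h1 IH mulmxE -exprS.
have uG : G \in unitmx.
  have : G *m Phi (invmx g) = 1%:M by rewrite -h1 mulmxV // h2.
  by case/mulmx1_unit.
have CH := Cayley_Hamilton G.
set c := char_poly G in CH.
have ce : c = \sum_(i < n.+2) c`_i *: 'X^i.
  by rewrite -{1}[c]coefK poly_def size_char_poly.
rewrite ce linear_sum /= in CH.
have : (u *m (\sum_(i < n.+2) c`_i *: G ^+ i) *m v) 0 0 = 0.
  have -> : \sum_(i < n.+2) c`_i *: G ^+ i = 0.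
    rewrite -[RHS]CH; apply: eq_bigr => i _.
    by rewrite linearZ /= rmorphXn /= horner_mx_X.
  by rewrite mulmx0 mul0mx mxE.
rewrite lin_l big_ord_recl big1 ?addr0; last first.
  by move=> i _; rewrite -hpow -hF hk mulr0.
rewrite expr0 -idmxE mulmx1 => /eqP; rewrite mulf_eq0 => /orP[|/eqP //].
rewrite /c char_poly_det mulf_eq0 signr_eq0 /=.
by move: uG; rewrite unitmxE unitfE => /negbTE ->.
Qed.
Definition LinP (R : realType) (F : 'M[R]_3 -> R) :=
  forall A B : 'M[R]_3, exists P : {poly R}, forall t, F (A + t *: B) = P.[t].

Definition Good (R : realType) (F : 'M[R]_3 -> R) := RepF F /\ LinP F.

Lemma Good_ext (R : realType) (F G : 'M[R]_3 -> R) :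
  (forall M, F M = G M) -> Good F -> Good G.
Proof.
move=> e [h1 h2]; split; first exact: RepF_ext h1.
move=> A B; have [P hP] := h2 A B; exists P => t; by rewrite -e.
Qed.

Lemma Good_const (R : realType) (c : R) : Good (fun _ => c).
Proof.
split; first exact: RepF_const.
by move=> A B; exists c%:P => t; rewrite hornerC.
Qed.

Lemma Good_coord (R : realType) (a b : 'I_3) : Good (fun M : 'M[R]_3 => M a b).
Proof.
split; first exact: RepF_coord.
move=> A B; exists ((A a b)%:P + B a b *: 'X) => t.
by rewrite hornerD hornerC hornerZ hornerX !mxE mulrC.
Qed.

Lemma Good_add (R : realType) (F G : 'M[R]_3 -> R) :
  Good F -> Good G -> Good (fun M => F M + G M).
Proof.
move=> [h1 h2] [h1' h2']; split; first exact: RepF_add.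
move=> A B; have [P hP] := h2 A B; have [Q hQ] := h2' A B.
by exists (P + Q) => t; rewrite hornerD hP hQ.
Qed.

Lemma Good_mul (R : realType) (F G : 'M[R]_3 -> R) :
  Good F -> Good G -> Good (fun M => F M * G M).
Proof.
move=> [h1 h2] [h1' h2']; split; first exact: RepF_mul.
move=> A B; have [P hP] := h2 A B; have [Q hQ] := h2' A B.
by exists (P * Q) => t; rewrite hornerM hP hQ.
Qed.

Lemma Good_lr (R : realType) (F : 'M[R]_3 -> R) (x y : 'M[R]_3) :
  Good F -> Good (fun M => F (x *m M *m y)).
Proof.
move=> [h1 h2]; split; first exact: RepF_lr.
move=> A B; have [P hP] := h2 (x *m A *m y) (x *m B *m y).
exists P => t; rewrite -hP; congr F.
by rewrite mulmxDr mulmxDl -scalemxAr -scalemxAl.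
Qed.

Lemma Good_sum (R : realType) (T : Type) (r : seq T) (f : T -> 'M[R]_3 -> R) :
  (forall i, Good (f i)) -> Good (fun M => \sum_(i <- r) f i M).
Proof.
move=> h; elim: r => [|a r IH].
  by apply: (Good_ext _ (Good_const 0)) => M; rewrite big_nil.
apply: (Good_ext _ (Good_add (h a) IH)) => M; by rewrite big_cons.
Qed.

Lemma Good_prod (R : realType) (T : Type) (r : seq T) (f : T -> 'M[R]_3 -> R) :
  (forall i, Good (f i)) -> Good (fun M => \prod_(i <- r) f i M).
Proof.
move=> h; elim: r => [|a r IH].
  by apply: (Good_ext _ (Good_const 1)) => M; rewrite big_nil.
apply: (Good_ext _ (Good_mul (h a) IH)) => M; by rewrite big_cons.
Qed.

Lemma Good_exp (R : realType) (F : 'M[R]_3 -> R) k :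
  Good F -> Good (fun M => F M ^+ k).
Proof.
move=> h; elim: k => [|k IH].
  by apply: (Good_ext _ (Good_const 1)) => M; rewrite expr0.
apply: (Good_ext _ (Good_mul h IH)) => M; by rewrite exprS.
Qed.

Lemma Good_entries (R : realType) (i : 'I_(3 * 3)) :
  Good (fun M : 'M[R]_3 => entries M i).
Proof.
case/mxvec_indexP: i => a b.
apply: (Good_ext (F := fun M : 'M[R]_3 => M a b)); last exact: Good_coord.
by move=> M; rewrite /entries mxvecE.
Qed.

Lemma Good_meval (R : realType) (p : {mpoly R[3 * 3]}) :
  Good (fun M : 'M[R]_3 => p.@[entries M]).
Proof.
apply: (Good_ext (fun M => esym (mevalE _ _))).
apply: Good_sum => m; apply: Good_mul; first exact: Good_const.
rewrite /index_enum.
apply: Good_prod => i; apply: Good_exp; exact: Good_entries.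
Qed.
Definition Zc (R : realType) (S : 'M[R]_3 -> Prop) (M : 'M[R]_3) :=
  forall F, Good F -> (forall s, S s -> F s = 0) -> F M = 0.

Definition semig (R : realType) (S : 'M[R]_3 -> Prop) :=
  forall a b, S a -> S b -> S (a *m b).

Lemma Zc_S (R : realType) (S : 'M[R]_3 -> Prop) M : S M -> Zc S M.
Proof. by move=> hM F _ hF; apply: hF. Qed.

Lemma Zc_mulS (R : realType) (S : 'M[R]_3 -> Prop) M s :
  semig S -> Zc S M -> S s -> Zc S (M *m s).
Proof.
move=> hS hM hs F hG hF.
have := hM (fun X => F (1%:M *m X *m s)) (Good_lr _ _ hG).
rewrite mul1mx; apply => s' hs'; rewrite mul1mx; apply: hF; exact: hS.
Qed.

Lemma Zc_mul (R : realType) (S : 'M[R]_3 -> Prop) M M' :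
  semig S -> Zc S M -> Zc S M' -> Zc S (M *m M').
Proof.
move=> hS hM hM' F hG hF.
have := hM' (fun X => F (M *m X *m 1%:M)) (Good_lr _ _ hG).
rewrite mulmx1; apply => s hs; rewrite mulmx1.
exact: (Zc_mulS hS hM hs).
Qed.

Lemma Zc_pow (R : realType) (S : 'M[R]_3 -> Prop) g k :
  semig S -> Zc S g -> Zc S (g ^+ k.+1).
Proof.
move=> hS hg; elim: k => [|k IH]; first by rewrite expr1.
by rewrite exprS -mulmxE; apply: Zc_mul.
Qed.

Lemma Zc_inv (R : realType) (S : 'M[R]_3 -> Prop) M s :
  semig S -> Zc S M -> Zc S s -> s \in unitmx -> Zc S (M *m invmx s).
Proof.
move=> hS hM hs us F hG hF.
have hG' := Good_lr M (invmx s) hG.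
have := RepF_inv hG'.1 us; rewrite mulmx1; apply => k.
rewrite exprSr -mulmxE mulmxA mulmxK //.
case: k => [|k]; first by rewrite expr0 -idmxE mulmx1; apply: hM.
by apply: (Zc_mul hS hM (Zc_pow k hS hs)).
Qed.

Lemma poly_nat0 (R : realType) (P : {poly R}) :
  (forall k, P.[k.+1%:R] = 0) -> P = 0.
Proof.
move=> hk.
apply: (@roots_geq_poly_eq0 _ P [seq (k.+1)%:R | k <- iota 0 (size P)]).
- by apply/allP => x /mapP [k _ ->]; apply/rootP.
- rewrite map_inj_uniq ?iota_uniq // => a b /eqP.
  by rewrite eqr_nat eqSS => /eqP.
- by rewrite size_map size_iota.
Qed.

Lemma Zc_unip (R : realType) (S : 'M[R]_3 -> Prop) (E : 'M[R]_3) :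
  semig S -> E *m E = 0 -> Zc S (1%:M + E) -> forall t, Zc S (1%:M + t *: E).
Proof.
move=> hS hE hu t F hG hF.
have [P hP] := hG.2 1%:M E.
have hk k : (1%:M + E) ^+ k = 1%:M + k%:R *: E.
  elim: k => [|k IH]; first by rewrite expr0 scale0r addr0 idmxE.
  rewrite exprS IH -mulmxE mulmxDl !mulmxDr !mul1mx mulmx1 -scalemxAr hE.
  by rewrite scaler0 addr0 mulrS scalerDl scale1r addrA addrAC.
suff P0 : P = 0 by rewrite hP P0 horner0.
apply: poly_nat0 => k; rewrite -hP -hk.
exact: (Zc_pow k hS hu).
Qed.
Definition mk33 (R : realType) (a b c d e f g h k : R) : 'M[R]_3 :=
  \matrix_(i < 3, j < 3) nth 0 (nth [::] [:: [:: a; b; c]; [:: d; e; f]; [:: g; h; k]] i) j.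

Lemma mul33 (R : realType) (a b c d e f g h k a' b' c' d' e' f' g' h' k' : R) :
  mk33 a b c d e f g h k *m mk33 a' b' c' d' e' f' g' h' k' =
  mk33 (a*a' + b*d' + c*g') (a*b' + b*e' + c*h') (a*c' + b*f' + c*k')
       (d*a' + e*d' + f*g') (d*b' + e*e' + f*h') (d*c' + e*f' + f*k')
       (g*a' + h*d' + k*g') (g*b' + h*e' + k*h') (g*c' + h*f' + k*k').
Proof.
apply/matrixP => i j; rewrite !mxE !big_ord_recr big_ord0 /= !mxE /= add0r.
by case: i j => [[|[|[|i]]] Hi] [[|[|[|j]]] Hj] //=.
Qed.

Lemma mx33E (R : realType) (M : 'M[R]_3) :
  M = mk33 (M 0 0) (M 0 1) (M 0 2%:R) (M 1 0) (M 1 1) (M 1 2%:R)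
           (M 2%:R 0) (M 2%:R 1) (M 2%:R 2%:R).
Proof.
apply/matrixP => i j; rewrite mxE.
by case: i j => [[|[|[|i]]] Hi] [[|[|[|j]]] Hj] //=; congr (M _ _); apply: val_inj.
Qed.

Lemma det33 (R : realType) (a b c d e f g h k : R) :
  \det (mk33 a b c d e f g h k) =
  a*e*k + b*f*g + c*d*h - c*e*g - b*d*k - a*f*h.
Proof.
rewrite (expand_det_row _ 0) !big_ord_recr big_ord0 /= add0r /cofactor.
rewrite !(expand_det_row _ 0) !big_ord_recr !big_ord0 /= !add0r /cofactor.
rewrite !det_mx11 !mxE /=.
rewrite !add0n; ring.
Qed.
Definition e01 (R : realType) (t : R) := mk33 1 t 0 0 1 0 0 0 1.
Definition e02 (R : realType) (t : R) := mk33 1 0 t 0 1 0 0 0 1.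
Definition e10 (R : realType) (t : R) := mk33 1 0 0 t 1 0 0 0 1.
Definition e12 (R : realType) (t : R) := mk33 1 0 0 0 1 t 0 0 1.
Definition e20 (R : realType) (t : R) := mk33 1 0 0 0 1 0 t 0 1.
Definition e21 (R : realType) (t : R) := mk33 1 0 0 0 1 0 0 t 1.

Lemma id33 (R : realType) : (1%:M : 'M[R]_3) = mk33 1 0 0 0 1 0 0 0 1.
Proof.
apply/matrixP => i j; rewrite !mxE.
by case: i j => [[|[|[|i]]] Hi] [[|[|[|j]]] Hj].
Qed.

Lemma Gl_det (R : realType) (G : 'M[R]_3 -> Prop) (E E' M N : 'M[R]_3) :
  (forall A B, G A -> G B -> G (A *m B)) ->
  G E' -> E' *m E = 1%:M -> \det E = 1 -> E *m M = N ->
  (\det N = 1 -> G N) -> \det M = 1 -> G M.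
Proof.
move=> mulG hE' inv dE eN hN dM.
have : G (E' *m N).
  apply: mulG hE' (hN _); by rewrite -eN det_mulmx dE dM mulr1.
by rewrite -eN mulmxA inv mul1mx.
Qed.

Lemma Gr_det (R : realType) (G : 'M[R]_3 -> Prop) (E E' M N : 'M[R]_3) :
  (forall A B, G A -> G B -> G (A *m B)) ->
  G E' -> E *m E' = 1%:M -> \det E = 1 -> M *m E = N ->
  (\det N = 1 -> G N) -> \det M = 1 -> G M.
Proof.
move=> mulG hE' inv dE eN hN dM.
have : G (N *m E').
  apply: mulG (hN _) hE'; by rewrite -eN det_mulmx dE dM mulr1.
by rewrite -eN -mulmxA inv mulmx1.
Qed.

Lemma SL3_gen (R : realType) (G : 'M[R]_3 -> Prop) :
  (forall A B, G A -> G B -> G (A *m B)) ->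
  (forall t, G (e01 t)) -> (forall t, G (e02 t)) -> (forall t, G (e10 t)) ->
  (forall t, G (e12 t)) -> (forall t, G (e20 t)) -> (forall t, G (e21 t)) ->
  forall M, \det M = 1 -> G M.
Proof.
move=> mulG h01 h02 h10 h12 h20 h21.
have C2 f h k : \det (mk33 1 0 0 0 1 f 0 h k) = 1 -> G (mk33 1 0 0 0 1 f 0 h k).
  rewrite det33 => H.
  have hk : k = 1 + f * h by rewrite -H; ring.
  subst k.
  have -> : mk33 1 0 0 0 1 f 0 h (1 + f * h) = e21 h *m e12 f.
    by rewrite mul33; congr mk33; ring.
  exact: mulG.
have C e f h k : \det (mk33 1 0 0 0 e f 0 h k) = 1 -> G (mk33 1 0 0 0 e f 0 h k).
  have Ch e' f' h' k' : h' != 0 -> \det (mk33 1 0 0 0 e' f' 0 h' k') = 1 ->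
      G (mk33 1 0 0 0 e' f' 0 h' k').
    move=> hne.
    apply: (Gl_det (E := e12 ((1 - e') / h')) (E' := e12 (- ((1 - e') / h')))
      (N := mk33 1 0 0 0 1 (f' + (1 - e') / h' * k') 0 h' k') mulG (h12 _)) => //.
    - by rewrite /e12 mul33 id33; congr mk33; ring.
    - by rewrite /e12 det33; ring.
    - by rewrite /e12 mul33; congr mk33; field.
    exact: C2.
  have [h0|hn] := eqVneq h 0; last exact: Ch.
  rewrite h0.
  apply: (Gl_det (E := e21 1) (E' := e21 (-1))
      (N := mk33 1 0 0 0 e f 0 e (k + f)) mulG (h21 _)) => //.
  - by rewrite /e21 mul33 id33; congr mk33; ring.
  - by rewrite /e21 det33; ring.
  - by rewrite /e21 mul33; congr mk33; ring.
  move=> dN; apply: (Ch _ _ _ _ _ dN); apply/eqP => e0; move: dN.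
  rewrite det33 e0; move/eqP; rewrite !(mul0r, mulr0, subr0, addr0, add0r).
  by rewrite ?oppr0 eq_sym oner_eq0.
have B b c d e f g h k : \det (mk33 1 b c d e f g h k) = 1 ->
    G (mk33 1 b c d e f g h k).
  apply: (Gl_det (E := e10 (- d)) (E' := e10 d)
      (N := mk33 1 b c 0 (e - d * b) (f - d * c) g h k) mulG (h10 _)) => //.
  - by rewrite /e10 mul33 id33; congr mk33; ring.
  - by rewrite /e10 det33; ring.
  - by rewrite /e10 mul33; congr mk33; ring.
  apply: (Gl_det (E := e20 (- g)) (E' := e20 g)
      (N := mk33 1 b c 0 (e - d * b) (f - d * c) 0 (h - g * b) (k - g * c)) mulG (h20 _)) => //.
  - by rewrite /e20 mul33 id33; congr mk33; ring.
  - by rewrite /e20 det33; ring.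
  - by rewrite /e20 mul33; congr mk33; ring.
  apply: (Gr_det (E := e01 (- b)) (E' := e01 b)
      (N := mk33 1 0 c 0 (e - d * b) (f - d * c) 0 (h - g * b) (k - g * c)) mulG (h01 _)) => //.
  - by rewrite /e01 mul33 id33; congr mk33; ring.
  - by rewrite /e01 det33; ring.
  - by rewrite /e01 mul33; congr mk33; ring.
  apply: (Gr_det (E := e02 (- c)) (E' := e02 c)
      (N := mk33 1 0 0 0 (e - d * b) (f - d * c) 0 (h - g * b) (k - g * c)) mulG (h02 _)) => //.
  - by rewrite /e02 mul33 id33; congr mk33; ring.
  - by rewrite /e02 det33; ring.
  - by rewrite /e02 mul33; congr mk33; ring.
  exact: C.
have A1 a b c d e f g h k : d != 0 -> \det (mk33 a b c d e f g h k) = 1 ->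
    G (mk33 a b c d e f g h k).
  move=> hne.
  apply: (Gl_det (E := e01 ((1 - a) / d)) (E' := e01 (- ((1 - a) / d)))
      (N := mk33 1 (b + (1 - a) / d * e) (c + (1 - a) / d * f) d e f g h k) mulG (h01 _)) => //.
  - by rewrite /e01 mul33 id33; congr mk33; ring.
  - by rewrite /e01 det33; ring.
  - by rewrite /e01 mul33; congr mk33; field.
  exact: B.
have A2 a b c d e f g h k : g != 0 -> \det (mk33 a b c d e f g h k) = 1 ->
    G (mk33 a b c d e f g h k).
  move=> hne.
  apply: (Gl_det (E := e02 ((1 - a) / g)) (E' := e02 (- ((1 - a) / g)))
      (N := mk33 1 (b + (1 - a) / g * h) (c + (1 - a) / g * k) d e f g h k) mulG (h02 _)) => //.
  - by rewrite /e02 mul33 id33; congr mk33; ring.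
  - by rewrite /e02 det33; ring.
  - by rewrite /e02 mul33; congr mk33; field.
  exact: B.
move=> M; rewrite (mx33E M).
set a := M 0 0; set b := M 0 1; set c := M 0 2%:R; set d := M 1 0.
set e := M 1 1; set f := M 1 2%:R; set g := M 2%:R 0; set h := M 2%:R 1.
set k := M 2%:R 2%:R.
have [d0|?] := eqVneq d 0; last exact: A1.
have [g0|?] := eqVneq g 0; last exact: A2.
rewrite d0 g0 => dM.
have ha : a != 0.
  apply/eqP => a0; move: dM; rewrite det33 a0.
  move/eqP; rewrite !(mul0r, mulr0, subr0, addr0, add0r, sub0r).
  by rewrite ?oppr0 eq_sym oner_eq0.
move: dM; apply: (Gl_det (E := e10 1) (E' := e10 (-1))
      (N := mk33 a b c a (e + b) (f + c) 0 h k) mulG (h10 _)) => //.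
- by rewrite /e10 mul33 id33; congr mk33; ring.
- by rewrite /e10 det33; ring.
- by rewrite /e10 mul33; congr mk33; ring.
exact: A1.
Qed.
Lemma add33 (R : realType) (a b c d e f g h k a' b' c' d' e' f' g' h' k' : R) :
  mk33 a b c d e f g h k + mk33 a' b' c' d' e' f' g' h' k' =
  mk33 (a + a') (b + b') (c + c') (d + d') (e + e') (f + f') (g + g') (h + h') (k + k').
Proof.
apply/matrixP => i j; rewrite !mxE.
by case: i j => [[|[|[|i]]] Hi] [[|[|[|j]]] Hj].
Qed.

Lemma scale33 (R : realType) (x a b c d e f g h k : R) :
  x *: mk33 a b c d e f g h k =
  mk33 (x * a) (x * b) (x * c) (x * d) (x * e) (x * f) (x * g) (x * h) (x * k).
Proof.
apply/matrixP => i j; rewrite !mxE.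
by case: i j => [[|[|[|i]]] Hi] [[|[|[|j]]] Hj].
Qed.

Lemma Agen0 (R : realType) : Agen R 0 = mk33 1 1 1 0 1 0 0 0 1.
Proof.
apply/matrixP => i j; rewrite !mxE.
by case: i j => [[|[|[|i]]] Hi] [[|[|[|j]]] Hj].
Qed.
Lemma Agen1 (R : realType) : Agen R 1 = mk33 1 0 0 1 1 1 0 0 1.
Proof.
apply/matrixP => i j; rewrite !mxE.
by case: i j => [[|[|[|i]]] Hi] [[|[|[|j]]] Hj].
Qed.
Lemma Agen2 (R : realType) : Agen R 2%:R = mk33 1 0 0 0 1 0 1 1 1.
Proof.
apply/matrixP => i j; rewrite !mxE.
by case: i j => [[|[|[|i]]] Hi] [[|[|[|j]]] Hj].
Qed.

Definition A1m (R : realType) : 'M[R]_3 := mk33 1 1 1 0 1 0 0 0 1.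
Definition A2m (R : realType) : 'M[R]_3 := mk33 1 0 0 1 1 1 0 0 1.
Definition A3m (R : realType) : 'M[R]_3 := mk33 1 0 0 0 1 0 1 1 1.
Definition a1m (R : realType) : 'M[R]_3 := mk33 1 (-1) (-1) 0 1 0 0 0 1.
Definition a2m (R : realType) : 'M[R]_3 := mk33 1 0 0 (-1) 1 (-1) 0 0 1.
Definition a3m (R : realType) : 'M[R]_3 := mk33 1 0 0 0 1 0 (-1) (-1) 1.

Ltac wordtac :=
  rewrite /A1m /A2m /A3m /a1m /a2m /a3m /e01 /e02 /e10 /e12 /e20 /e21;
  do 7 (rewrite mul33 ?(mul0r, mulr0, mul1r, mulr1, add0r, addr0, mulN1r, mulrN1, opprK));
  congr mk33; ring.


Lemma opp33 (R : realType) (a b c d e f g h k : R) :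
  - mk33 a b c d e f g h k = mk33 (- a) (- b) (- c) (- d) (- e) (- f) (- g) (- h) (- k).
Proof.
apply/matrixP => i j; rewrite !mxE.
by case: i j => [[|[|[|i]]] Hi] [[|[|[|j]]] Hj].
Qed.
Lemma w21 (R : realType) : A1m R *m A2m R *m a1m R *m A3m R *m A1m R *m a2m R *m a1m R *m A3m R = e21 4.
Proof. wordtac. Qed.
Lemma w02 (R : realType) : A1m R *m A2m R *m A3m R *m a1m R *m a2m R *m A1m R *m a3m R *m a2m R = e02 4.
Proof. wordtac. Qed.
Lemma w01 (R : realType) : A1m R *m A2m R *m a3m R *m a1m R *m a2m R *m A1m R *m A3m R *m a2m R = e01 4.
Proof. wordtac. Qed.
Lemma w20 (R : realType) : A1m R *m a2m R *m a1m R *m A3m R *m A1m R *m A2m R *m a1m R *m A3m R = e20 4.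
Proof. wordtac. Qed.
Lemma w12 (R : realType) : A1m R *m A3m R *m a1m R *m A2m R *m A1m R *m a3m R *m a1m R *m A2m R = e12 4.
Proof. wordtac. Qed.
Lemma w10 (R : realType) : A1m R *m a3m R *m a1m R *m A2m R *m A1m R *m A3m R *m a1m R *m A2m R = e10 4.
Proof. wordtac. Qed.
Lemma Zc_elem (R : realType) (S : 'M[R]_3 -> Prop) (E : 'M[R]_3) :
  semig S -> E *m E = 0 -> Zc S (1%:M + 4 *: E) -> forall t, Zc S (1%:M + t *: E).
Proof.
move=> hS hE h t.
have := Zc_unip hS _ h (t / 4).
rewrite scalerA divfK ?pnatr_eq0 //; apply.
by rewrite -scalemxAl -scalemxAr hE !scaler0.
Qed.

Lemma Zc_gen_e (R : realType) (S : 'M[R]_3 -> Prop) (f : R -> 'M[R]_3) :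
  semig S -> (forall u, f u = 1%:M + u *: (f 1 - 1%:M)) ->
  (f 1 - 1%:M) *m (f 1 - 1%:M) = 0 -> Zc S (f 4) -> forall t, Zc S (f t).
Proof.
move=> hS eE hsq h t; rewrite eE; apply: Zc_elem => //; by rewrite -eE.
Qed.

Lemma zero33 (R : realType) : (0 : 'M[R]_3) = mk33 0 0 0 0 0 0 0 0 0.
Proof.
apply/matrixP => i j; rewrite !mxE.
by case: i j => [[|[|[|i]]] Hi] [[|[|[|j]]] Hj].
Qed.

Ltac etac :=
  apply: Zc_gen_e => //; [
    move=> u; rewrite /e01 /e02 /e10 /e12 /e20 /e21 id33 -scaleN1r !(scale33, add33);
    congr mk33; ring
  | rewrite /e01 /e02 /e10 /e12 /e20 /e21 id33 -scaleN1r !(scale33, add33) mul33 zero33;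
    congr mk33; ring ].

Lemma Zc_e01 (R : realType) (S : 'M[R]_3 -> Prop) :
  semig S -> Zc S (e01 4) -> forall t, Zc S (e01 t).
Proof. move=> hS; etac. Qed.
Lemma Zc_e02 (R : realType) (S : 'M[R]_3 -> Prop) :
  semig S -> Zc S (e02 4) -> forall t, Zc S (e02 t).
Proof. move=> hS; etac. Qed.
Lemma Zc_e10 (R : realType) (S : 'M[R]_3 -> Prop) :
  semig S -> Zc S (e10 4) -> forall t, Zc S (e10 t).
Proof. move=> hS; etac. Qed.
Lemma Zc_e12 (R : realType) (S : 'M[R]_3 -> Prop) :
  semig S -> Zc S (e12 4) -> forall t, Zc S (e12 t).
Proof. move=> hS; etac. Qed.
Lemma Zc_e20 (R : realType) (S : 'M[R]_3 -> Prop) :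
  semig S -> Zc S (e20 4) -> forall t, Zc S (e20 t).
Proof. move=> hS; etac. Qed.
Lemma Zc_e21 (R : realType) (S : 'M[R]_3 -> Prop) :
  semig S -> Zc S (e21 4) -> forall t, Zc S (e21 t).
Proof. move=> hS; etac. Qed.

Lemma Zc_A (R : realType) (S : 'M[R]_3 -> Prop) (Ai Aj : 'M[R]_3) :
  semig S -> Zc S (Ai *m Ai *m Aj) -> Zc S (Ai *m Aj) -> \det (Ai *m Aj) = 1 ->
  Zc S Ai.
Proof.
move=> hS h2 h1 d.
have u : Ai *m Aj \in unitmx by rewrite unitmxE d unitr1.
by have := Zc_inv hS h2 h1 u; rewrite -[Ai *m Ai *m Aj]mulmxA mulmxK.
Qed.

Lemma Zc_ainv (R : realType) (S : 'M[R]_3 -> Prop) (A a : 'M[R]_3) :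
  semig S -> A = 1%:M + (A - 1%:M) -> (A - 1%:M) *m (A - 1%:M) = 0 ->
  a = 1%:M + (-1) *: (A - 1%:M) -> Zc S A -> Zc S a.
Proof.
move=> hS e1 hsq e2 h; rewrite e2; apply: Zc_unip => //; by rewrite -e1.
Qed.
Ltac ainv_tac :=
  rewrite /A1m /A2m /A3m /a1m /a2m /a3m id33 ?zero33 !(scale33, add33, opp33) ?mul33 ?zero33;
  congr mk33; ring.

Lemma Zc_A1 (R : realType) (S : 'M[R]_3 -> Prop) :
  semig S -> Zc S (A1m R *m A2m R) -> Zc S (A1m R *m A1m R *m A2m R) ->
  Zc S (A1m R) /\ Zc S (a1m R).
Proof.
move=> hS h1 h2.
have hA : Zc S (A1m R).
  by apply: Zc_A hS h2 h1 _; rewrite /A1m /A2m mul33 det33; ring.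
split=> //; apply: (Zc_ainv hS _ _ _ hA); first (by rewrite addrC subrK); ainv_tac.
Qed.

Lemma Zc_A2 (R : realType) (S : 'M[R]_3 -> Prop) :
  semig S -> Zc S (A2m R *m A3m R) -> Zc S (A2m R *m A2m R *m A3m R) ->
  Zc S (A2m R) /\ Zc S (a2m R).
Proof.
move=> hS h1 h2.
have hA : Zc S (A2m R).
  by apply: Zc_A hS h2 h1 _; rewrite /A2m /A3m mul33 det33; ring.
split=> //; apply: (Zc_ainv hS _ _ _ hA); first (by rewrite addrC subrK); ainv_tac.
Qed.

Lemma Zc_A3 (R : realType) (S : 'M[R]_3 -> Prop) :
  semig S -> Zc S (A3m R *m A1m R) -> Zc S (A3m R *m A3m R *m A1m R) ->
  Zc S (A3m R) /\ Zc S (a3m R).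
Proof.
move=> hS h1 h2.
have hA : Zc S (A3m R).
  by apply: Zc_A hS h2 h1 _; rewrite /A3m /A1m mul33 det33; ring.
split=> //; apply: (Zc_ainv hS _ _ _ hA); first (by rewrite addrC subrK); ainv_tac.
Qed.
Theorem proposition6p8 (R : realType) (GammaN : nat -> seq 'M[R]_3) :
  (forall N, {subset GammaN N <= GammaN N.+1}) ->
  (forall N M, M \in GammaN N -> inGamma M) ->
  (forall M, inGamma M -> exists N, M \in GammaN N) ->
  exists N0 : nat, forall N, (N0 <= N)%N ->
    zariski_dense_SL3 (semigroup_gen (fun M => M \in GammaN N)).
Proof.
move=> hsub _ hall.
have mono N N' : (N <= N')%N -> {subset GammaN N <= GammaN N'}.
  move=> /subnK <-; elim: (N' - N)%N => [|d IH] M hM //=.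
  rewrite addSn; exact/hsub/IH.
have [N1 h1] := hall (Agen R 0 ^+ 1 *m Agen R 1) (ex_intro _ 0 (ex_intro _ 1 (ex_intro _ 1%N (conj isT (conj isT erefl))))).
have [N2 h2] := hall (Agen R 0 ^+ 2 *m Agen R 1) (ex_intro _ 0 (ex_intro _ 1 (ex_intro _ 2%N (conj isT (conj isT erefl))))).
have [N3 h3] := hall (Agen R 1 ^+ 1 *m Agen R 2%:R) (ex_intro _ 1 (ex_intro _ 2%:R (ex_intro _ 1%N (conj isT (conj isT erefl))))).
have [N4 h4] := hall (Agen R 1 ^+ 2 *m Agen R 2%:R) (ex_intro _ 1 (ex_intro _ 2%:R (ex_intro _ 2%N (conj isT (conj isT erefl))))).
have [N5 h5] := hall (Agen R 2%:R ^+ 1 *m Agen R 0) (ex_intro _ 2%:R (ex_intro _ 0 (ex_intro _ 1%N (conj isT (conj isT erefl))))).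
have [N6 h6] := hall (Agen R 2%:R ^+ 2 *m Agen R 0) (ex_intro _ 2%:R (ex_intro _ 0 (ex_intro _ 2%N (conj isT (conj isT erefl))))).
exists (N1 + N2 + N3 + N4 + N5 + N6)%N => N hN.
set S := semigroup_gen (fun M => M \in GammaN N).
have hS : semig S by move=> a b; apply: sg_mul.
have zS M Ni : (Ni <= N)%N -> M \in GammaN Ni -> Zc S M.
  move=> le h; apply: Zc_S; apply: sg_base; exact: mono le _ h.
have Z1 : Zc S (Agen R 0 ^+ 1 *m Agen R 1) by apply: (zS _ N1) => //; lia.
have Z2 : Zc S (Agen R 0 ^+ 2 *m Agen R 1) by apply: (zS _ N2) => //; lia.
have Z3 : Zc S (Agen R 1 ^+ 1 *m Agen R 2%:R) by apply: (zS _ N3) => //; lia.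
have Z4 : Zc S (Agen R 1 ^+ 2 *m Agen R 2%:R) by apply: (zS _ N4) => //; lia.
have Z5 : Zc S (Agen R 2%:R ^+ 1 *m Agen R 0) by apply: (zS _ N5) => //; lia.
have Z6 : Zc S (Agen R 2%:R ^+ 2 *m Agen R 0) by apply: (zS _ N6) => //; lia.
rewrite expr1 !Agen0 !Agen1 !Agen2 in Z1 Z3 Z5.
rewrite expr2 -mulmxE !Agen0 !Agen1 !Agen2 in Z2 Z4 Z6.
have [ZA1 Za1] := Zc_A1 hS Z1 Z2.
have [ZA2 Za2] := Zc_A2 hS Z3 Z4.
have [ZA3 Za3] := Zc_A3 hS Z5 Z6.
have W01 : Zc S (e01 4) by rewrite -(w01 R); repeat apply: (Zc_mul hS).
have W02 : Zc S (e02 4) by rewrite -(w02 R); repeat apply: (Zc_mul hS).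
have W10 : Zc S (e10 4) by rewrite -(w10 R); repeat apply: (Zc_mul hS).
have W12 : Zc S (e12 4) by rewrite -(w12 R); repeat apply: (Zc_mul hS).
have W20 : Zc S (e20 4) by rewrite -(w20 R); repeat apply: (Zc_mul hS).
have W21 : Zc S (e21 4) by rewrite -(w21 R); repeat apply: (Zc_mul hS).
move=> p hp M dM.
have ZM : Zc S M.
  apply: (SL3_gen (G := Zc S)) dM.
  - by move=> A B; apply: Zc_mul.
  - exact: Zc_e01.
  - exact: Zc_e02.
  - exact: Zc_e10.
  - exact: Zc_e12.
  - exact: Zc_e20.
  - exact: Zc_e21.
exact: (ZM _ (Good_meval p) hp).
Qed.
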